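(* Let $S$ and $R$ be two nodes joined by $h$ parallel undirected unit-capacity edges, and let $0\le k\le h$. Against a $k$-edge passive adversary, every $N$-round protocol by which $S$ securely sends a message $\mathcal{W}$ to $R$ satisfies $H(\mathcal{W})\le N(h-k)$, i.e. the secrecy rate is at most $h-k$.
   Context: Each use of an edge carries one symbol of a finite field $\mathbb{F}$; entropies in units of $\log|\mathbb{F}|$. $S$ and $R$ each have private randomness ($\mathcal{K}_S$, $\mathcal{K}_R$), mutually independent and independent of $\mathcal{W}$; there is no shared randomness. In each round each undirected edge carries one symbol in one direction, and transmissions depend causally on the sender's message/randomness and previously received symbols. Decodability: $R$ recovers $\mathcal{W}$ with zero error. Secrecy: $H(\mathcal{W}\mid\mathcal{V}_{\mathcal{A}})=H(\mathcal{W})$, where a $k$-edge adversary chooses any $k$ of the edges and $\mathcal{V}_{\mathcal{A}}$ is all values sent on them during the protocol; this must hold for every choice. Secrecy rate is $H(\mathcal{W})/N$. *)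

(* Defs.v *)
From Stdlib Require Import Reals.
From mathcomp Require Import all_boot all_algebra.
Set Implicit Arguments. Unset Strict Implicit. Unset Printing Implicit Defensive.

Local Open Scope R_scope.

Definition prob (Om : finType) (p : Om -> R) (E : pred Om) : R :=
  \big[Rplus/R0]_(o | E o) p o.

Definition xlnx (x : R) : R := if Rlt_dec R0 x then x * ln x else R0.

Definition entropy (q : nat) (Om : finType) (p : Om -> R) (T : finType) (X : Om -> T) : R :=
  - (\big[Rplus/R0]_(x : T) xlnx (prob p (fun o => X o == x))) / ln (INR q).

Definition cond_entropy (q : nat) (Om : finType) (p : Om -> R) (T U : finType)
    (X : Om -> T) (Y : Om -> U) : R :=
  - (\big[Rplus/R0]_(x : T) \big[Rplus/R0]_(y : U)
        (let pxy := prob p (fun o => (X o == x) && (Y o == y)) in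
         let py  := prob p (fun o => Y o == y) in
         if Rlt_dec R0 pxy then pxy * ln (pxy / py) else R0)) / ln (INR q).

(* Transcript after the first n rounds: entry (t, e) is the symbol sent on edge e
   in round t (for t < n), and the default z otherwise.  The symbol of round t is
   computed by [step t e hist] from the transcript [hist] of rounds < t only,
   which enforces causality.  Since every edge joins S and R, both nodes observe
   the whole past transcript. *)
Fixpoint transcript (F : Type) (z : F) (N h : nat)
    (step : 'I_N -> 'I_h -> ('I_N -> 'I_h -> F) -> F) (n : nat) : 'I_N -> 'I_h -> F :=
  match n with
  | 0 => fun _ _ => z
  | n'.+1 =>
      let prev := transcript z step n' in
      fun t e => if nat_of_ord t == n' then step t e prev else prev t e
  end.

(* Full run of the protocol.  dir t e = true : edge e carries S -> R in round t
   (S's symbol depends on message w, S's randomness ks and past transcript);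
   dir t e = false : R -> S (depends on R's randomness kr and past transcript). *)
Definition run (F : finFieldType) (N h : nat) (Wt KSt KRt : Type)
    (dir : 'I_N -> 'I_h -> bool)
    (fS : 'I_N -> 'I_h -> Wt -> KSt -> ('I_N -> 'I_h -> F) -> F)
    (fR : 'I_N -> 'I_h -> KRt -> ('I_N -> 'I_h -> F) -> F)
    (w : Wt) (ks : KSt) (kr : KRt) : 'I_N -> 'I_h -> F :=
  transcript (@GRing.zero F)
    (fun t e hist => if dir t e then fS t e w ks hist else fR t e kr hist) N.

Definition view (F : finFieldType) (N h : nat) (A : {set 'I_h})
    (tr : 'I_N -> 'I_h -> F) : {ffun 'I_N * 'I_h -> F} :=
  [ffun te : 'I_N * 'I_h => if te.2 \in A then tr te.1 te.2 else @GRing.zero F].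

(* Main.v *)
Require Import Defs.
From Stdlib Require Import Reals Lra Psatz FunctionalExtensionality.
From HB Require Import structures.
From mathcomp Require Import all_boot all_algebra.
Set Warnings "-notation-overridden -ambiguous-paths".
Set Implicit Arguments. Unset Strict Implicit. Unset Printing Implicit Defensive.
Local Open Scope R_scope.


Lemma Rplus_0l' : left_id R0 Rplus. Proof. move=> x; exact: Rplus_0_l. Qed.
Lemma Rplus_A : associative Rplus. Proof. move=> x y z; by rewrite Rplus_assoc. Qed.
HB.instance Definition _ := Monoid.isComLaw.Build R R0 Rplus Rplus_A Rplus_comm Rplus_0l'.

Lemma Rsum_le (I : finType) (P : pred I) (F G : I -> R) :
  (forall i, P i -> F i <= G i) ->
  \big[Rplus/R0]_(i | P i) F i <= \big[Rplus/R0]_(i | P i) G i.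
Proof.
move=> H; apply: (big_ind2 (fun a b => a <= b)) => //; first exact: Rle_refl.
move=> ? ? ? ? ? ?; exact: Rplus_le_compat.
Qed.

Lemma Rsum_ge0 (I : finType) (P : pred I) (F : I -> R) :
  (forall i, P i -> 0 <= F i) -> 0 <= \big[Rplus/R0]_(i | P i) F i.
Proof.
move=> H; apply: (big_ind (fun a => 0 <= a)) => //; first exact: Rle_refl.
move=> ? ? ? ?; lra.
Qed.

Lemma Rsum_mull (I : finType) (P : pred I) (F : I -> R) c :
  c * \big[Rplus/R0]_(i | P i) F i = \big[Rplus/R0]_(i | P i) (c * F i).
Proof.
apply: (big_rec2 (fun a b => c * a = b)); first by rewrite Rmult_0_r.
by move=> i a b _ <-; rewrite Rmult_plus_distr_l.
Qed.

Lemma Rsum_const (I : finType) (P : pred I) c :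
  \big[Rplus/R0]_(i | P i) c = INR #|P| * c.
Proof.
rewrite big_const; elim: #|P| => [|n IH]; first by rewrite /= Rmult_0_l.
rewrite iterS IH S_INR; ring.
Qed.

Definition posb (x : R) : bool := if Rlt_dec 0 x then true else false.

Lemma posbP x : reflect (0 < x) (posb x).
Proof. by rewrite /posb; case: Rlt_dec => H; constructor. Qed.

Lemma Rsum_pos (I : finType) (P : pred I) (F : I -> R) :
  (forall i, 0 <= F i) -> 0 < \big[Rplus/R0]_(i | P i) F i ->
  exists i, P i /\ 0 < F i.
Proof.
move=> H0 Hs; case: (pickP (fun i => P i && posb (F i))) => [i /andP[Pi /posbP Fi]|Hn].
  by exists i.
exfalso; have : \big[Rplus/R0]_(i | P i) F i <= \big[Rplus/R0]_(i | P i) 0.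
  apply: Rsum_le => i Pi; move: (Hn i); rewrite Pi /=.
  by case: (posbP (F i)) => // Hf _; apply: Rnot_lt_le.
rewrite [X in _ <= X]big1 // => H; lra.
Qed.

Lemma ln_le_sub1 u : 0 < u -> ln u <= u - 1.
Proof. move=> Hu; have := exp_ineq1_le (ln u); rewrite exp_ln //; lra. Qed.

Lemma gibbs (I : finType) (a : I -> R) (M : R) :
  (forall i, 0 <= a i) -> 0 < M -> INR #|[pred i | posb (a i)]| <= M ->
  let s := \big[Rplus/R0]_i a i in
  - ln M * s <= \big[Rplus/R0]_i
     (if Rlt_dec R0 (a i) then a i * ln (a i / s) else R0).
Proof.
move=> Ha HM Hcard s.
have Hs0 : 0 <= s by apply: Rsum_ge0.
have step : forall i, - ln M * a i + (if posb (a i) then a i - s / M else 0)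
   <= (if Rlt_dec R0 (a i) then a i * ln (a i / s) else R0).
  move=> i; rewrite /posb; case: Rlt_dec => Hai /=; last first.
    have -> : a i = 0 by have := Ha i; lra.
    lra.
  have Hsi : a i <= s.
    rewrite /s (bigD1 i) //=; have := @Rsum_ge0 I (fun j => j != i) a (fun j _ => Ha j); lra.
  have Hs : 0 < s by lra.
  set t := M * a i / s.
  have Ht : 0 < t by rewrite /t; apply: Rdiv_lt_0_compat => //; nra.
  have H := ln_le_sub1 (Rinv_0_lt_compat _ Ht).
  rewrite ln_Rinv // in H.
  have -> : a i / s = t * / M by rewrite /t; field; lra.
  rewrite ln_mult //; last by apply: Rinv_0_lt_compat.
  rewrite ln_Rinv //.
  have Hm : s / M = a i * / t by rewrite /t; field; lra.
  rewrite Hm.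
  have Hm2 : a i * (- ln t) <= a i * (/ t - 1) by apply: Rmult_le_compat_l; lra.
  nra.
apply: Rle_trans; last by apply: Rsum_le => i _; apply: step.
rewrite big_split /= -Rsum_mull -/s.
have -> : \big[Rplus/R0]_i (if posb (a i) then a i - s / M else 0)
   = s - INR #|[pred i | posb (a i)]| * (s / M).
  have -> : \big[Rplus/R0]_i (if posb (a i) then a i - s / M else 0)
     = \big[Rplus/R0]_i (a i + (- (if posb (a i) then s / M else 0))).
    apply: eq_bigr => i _; case: posbP => H //.
    have -> : a i = 0 by have := Ha i; lra.
    lra.
  rewrite big_split /= -/s.
  have -> : \big[Rplus/R0]_i - (if posb (a i) then s / M else 0)
     = -1 * \big[Rplus/R0]_i (if posb (a i) then s / M else 0).
    by rewrite Rsum_mull; apply: eq_bigr => i _; ring.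
  rewrite -big_mkcond Rsum_const /=.
  have -> : #|(fun i : I => posb (a i))| = #|[pred i | posb (a i)]| by apply: eq_card.
  ring.
have : INR #|[pred i | posb (a i)]| * (s / M) <= M * (s / M).
  apply: Rmult_le_compat_r => //; apply: Rmult_le_pos => //; apply/Rlt_le/Rinv_0_lt_compat => //.
move=> H.
have E : M * (s / M) = s by field; lra.
lra.
Qed.


Lemma transcriptE (F : Type) (z : F) (N h : nat) step m (t : 'I_N) (e : 'I_h) :
  transcript z step m t e =
  if (t < m)%nat then step t e (transcript z step t) else z.
Proof.
elim: m => [|m IH] //=.
case: eqP => [Ht|Ht].
  by rewrite Ht ltnSn.
have -> : (t < m.+1)%N = (t < m)%N by rewrite ltnS leq_eqVlt (introF eqP Ht).
exact: IH.
Qed.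

Definition pre (F : Type) (z : F) (N h : nat) (T : 'I_N -> 'I_h -> F) (t : nat) :=
  fun (t' : 'I_N) (e' : 'I_h) => if (t' < t)%nat then T t' e' else z.

Lemma transcript_pre (F : Type) (z : F) (N h : nat) step (t : nat) :
  transcript z step t = pre z (@transcript F z N h step N) t.
Proof.
apply: functional_extensionality => t'; apply: functional_extensionality => e'.
rewrite /pre !transcriptE ltn_ord; by case: ifP.
Qed.

Lemma rect (F : finFieldType) (N h : nat) (Wt KSt KRt : Type)
    (dir : 'I_N -> 'I_h -> bool)
    (fS : 'I_N -> 'I_h -> Wt -> KSt -> ('I_N -> 'I_h -> F) -> F)
    (fR : 'I_N -> 'I_h -> KRt -> ('I_N -> 'I_h -> F) -> F)
    w1 s1 r1 w2 s2 r2 :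
  run dir fS fR w1 s1 r1 = run dir fS fR w2 s2 r2 ->
  run dir fS fR w1 s1 r2 = run dir fS fR w1 s1 r1.
Proof.
move=> E.
suff H : forall m (t : 'I_N) e, (t < m)%nat ->
   run dir fS fR w1 s1 r2 t e = run dir fS fR w1 s1 r1 t e.
  apply: functional_extensionality => t; apply: functional_extensionality => e.
  by apply: (H N).
rewrite /run; rewrite /run in E.
elim=> [|m IH] t e //.
rewrite ltnS => Htm.
have Hpre : pre 0%R (transcript 0%R (fun t e hist => if dir t e then fS t e w1 s1 hist
                                                   else fR t e r2 hist) N) t
          = pre 0%R (transcript 0%R (fun t e hist => if dir t e then fS t e w1 s1 hist
                                                   else fR t e r1 hist) N) t.
  apply: functional_extensionality => t'; apply: functional_extensionality => e'.
  rewrite /pre; case: ifP => // Ht'; apply: IH.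
  exact: leq_trans Ht' Htm.
rewrite !(transcriptE _ _ N) ltn_ord.
rewrite !(transcript_pre _ _ t) Hpre.
case D: (dir t e) => //.
move: (congr1 (fun T => T t e) E); rewrite /run /= !(transcriptE _ _ N) ltn_ord D.
rewrite !(transcript_pre _ _ t) => ->.
congr (fR t e r2 _).
apply: functional_extensionality => t'; apply: functional_extensionality => e'.
by rewrite /pre; case: ifP => // _; rewrite E.
Qed.


Lemma prob_marg (Om T : finType) (p : Om -> R) (X : Om -> T) (E : pred Om) :
  \big[Rplus/R0]_(x : T) prob p (fun o => (X o == x) && E o) = prob p E.
Proof.
rewrite /prob; under eq_bigr do rewrite big_mkcond.
rewrite exchange_big [RHS]big_mkcond; apply: eq_bigr => o _.
rewrite (bigD1 (X o)) //= eqxx /= big1 ?Rplus_0_r // => x Hx.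
by rewrite eq_sym (negbTE Hx).
Qed.

Lemma prob_ge0 (Om : finType) (p : Om -> R) E :
  (forall o, 0 <= p o) -> 0 <= prob p E.
Proof. by move=> H; apply: Rsum_ge0. Qed.

Lemma sum_pair (A B : finType) (f : A * B -> R) :
  \big[Rplus/R0]_(o : A * B) f o = \big[Rplus/R0]_a \big[Rplus/R0]_b f (a, b).
Proof. by rewrite [RHS]pair_big; apply: eq_big => // [[a b]]. Qed.

Lemma pos3 a b c : 0 <= a -> 0 <= b -> 0 <= c -> 0 < a * b * c ->
  0 < a /\ 0 < b /\ 0 < c.
Proof.
move=> Ha Hb Hc H.
case: (Rle_lt_or_eq_dec _ _ Ha) => Ha'; last by rewrite -Ha' in H; lra.
case: (Rle_lt_or_eq_dec _ _ Hb) => Hb'; last by rewrite -Hb' in H; lra.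
case: (Rle_lt_or_eq_dec _ _ Hc) => Hc'; last by rewrite -Hc' in H; lra.
by [].
Qed.

Lemma INR_expn q n : INR (q ^ n) = INR q ^ n.
Proof. elim: n => [|n IH] //; by rewrite expnS mult_INR IH. Qed.


Lemma count_supp (F : finFieldType) (h k N : nat) (Wt KSt KRt : finType)
    (pW : Wt -> R) (pS : KSt -> R) (pR : KRt -> R)
    (pW_ge0 : forall w, 0 <= pW w) (pS_ge0 : forall s, 0 <= pS s)
    (pR_ge0 : forall r, 0 <= pR r)
    (dir : 'I_N -> 'I_h -> bool)
    (fS : 'I_N -> 'I_h -> Wt -> KSt -> ('I_N -> 'I_h -> F) -> F)
    (fR : 'I_N -> 'I_h -> KRt -> ('I_N -> 'I_h -> F) -> F)
    (dec : KRt -> ('I_N -> 'I_h -> F) -> Wt) (A : {set 'I_h}) (y : {ffun 'I_N * 'I_h -> F})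
  (Hdec : forall w ks kr, 0 < pW w -> 0 < pS ks -> 0 < pR kr ->
     dec kr (run dir fS fR w ks kr) = w) :
  (#|[pred x : Wt | posb (prob (fun o : (Wt * KSt * KRt)%type => Rmult (Rmult (pW o.1.1) (pS o.1.2)) (pR o.2))
       (fun o => (o.1.1 == x) && (view A (run dir fS fR o.1.1 o.1.2 o.2) == y)))]|
     <= #|F| ^ (N * (h - #|A|)))%N.
Proof.
pose P := (fun o : (Wt * KSt * KRt)%type => pW o.1.1 * pS o.1.2 * pR o.2).
pose tr := (fun o : (Wt * KSt * KRt)%type => run dir fS fR o.1.1 o.1.2 o.2).
rewrite -/P -/tr.
set supp := [pred x | _].
have P_ge0 : forall o, 0 <= P o.
  by move=> o; apply: Rmult_le_pos; [apply: Rmult_le_pos|].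
pose Q x o := (o.1.1 == x) && (view A (tr o) == y) && posb (P o).
have Hex : forall x, x \in supp -> exists o, Q x o.
  move=> x /posbP Hx; have [o [Ho1 Ho2]] := Rsum_pos P_ge0 Hx.
  by exists o; rewrite /Q Ho1; apply/posbP.
pose g x := if [pick o | Q x o] is Some o then view (~: A) (tr o)
            else [ffun _ => 0%R] : {ffun 'I_N * 'I_h -> F}.
have Hg : {in supp &, injective g}.
  move=> x1 x2 H1 H2; rewrite /g.
  case: pickP => [o1 Q1|N1]; last by have [o Ho] := Hex _ H1; have := N1 o; rewrite Ho.
  case: pickP => [o2 Q2|N2]; last by have [o Ho] := Hex _ H2; have := N2 o; rewrite Ho.
  move: Q1 Q2; rewrite /Q => /andP[/andP[/eqP E1 /eqP V1] /posbP P1].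
  move=> /andP[/andP[/eqP E2 /eqP V2] /posbP P2] Hv.
  have Htr : tr o1 = tr o2.
    apply: functional_extensionality => t; apply: functional_extensionality => e.
    case Ae: (e \in A).
      move: (congr1 (fun f : {ffun _ -> F} => f (t, e)) (etrans V1 (esym V2))).
      by rewrite /view !ffunE /= Ae.
    move: (congr1 (fun f : {ffun _ -> F} => f (t, e)) Hv).
    by rewrite /view !ffunE /= inE Ae.
  move: o1 o2 E1 E2 V1 V2 P1 P2 Hv Htr => [[w1 s1] r1] [[w2 s2] r2] /= <- <- _ _ P1 P2 _.
  rewrite /tr /= => Htr.
  have [Hw1 [Hs1 Hr1]] := pos3 (pW_ge0 _) (pS_ge0 _) (pR_ge0 _) P1.
  have [Hw2 [Hs2 Hr2]] := pos3 (pW_ge0 _) (pS_ge0 _) (pR_ge0 _) P2.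
  have R3 := rect Htr.
  rewrite -(Hdec w1 s1 r2) // -(Hdec w2 s2 r2) //.
  by rewrite R3 Htr.
pose D := [set te : 'I_N * 'I_h | te.2 \notin A].
have Hsub : [set g x | x in supp] \subset pffun_on 0%R D predT.
  apply/subsetP => f /imsetP [x _ ->]; apply/pffun_onP; split; last by [].
  apply/subsetP => te; rewrite !inE; apply: contraR => HD.
  rewrite /g; case: pickP => [o _|_]; rewrite ffunE //.
  by rewrite inE (negPn HD).
have := subset_leq_card Hsub.
rewrite card_in_imset // card_pffun_on.
have -> : #|D| = (N * (h - #|A|))%N.
  have -> : D = setX [set: 'I_N] (~: A) by apply/setP => -[t e]; rewrite !inE.
  rewrite cardsX cardsT card_ord; congr (_ * _)%N.
  have := cardsC A; rewrite card_ord; move: #|~: A| #|A| => c a E.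
  by rewrite -E addKn.
by have -> : #|@predT F| = #|F| by apply: eq_card.
Qed.


Unset Implicit Arguments.
Theorem mainTheorem7 (F : finFieldType) (h k N : nat) (Wt KSt KRt : finType)
    (pW : Wt -> R) (pS : KSt -> R) (pR : KRt -> R)
    (pW_ge0 : forall w, 0 <= pW w) (pW_sum : \big[Rplus/R0]_(w : Wt) pW w = 1)
    (pS_ge0 : forall s, 0 <= pS s) (pS_sum : \big[Rplus/R0]_(s : KSt) pS s = 1)
    (pR_ge0 : forall r, 0 <= pR r) (pR_sum : \big[Rplus/R0]_(r : KRt) pR r = 1)
    (dir : 'I_N -> 'I_h -> bool)
    (fS : 'I_N -> 'I_h -> Wt -> KSt -> ('I_N -> 'I_h -> F) -> F)
    (fR : 'I_N -> 'I_h -> KRt -> ('I_N -> 'I_h -> F) -> F)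
    (dec : KRt -> ('I_N -> 'I_h -> F) -> Wt) :
  let P : (Wt * KSt * KRt)%type -> R := fun o => pW o.1.1 * pS o.1.2 * pR o.2 in
  let msg : (Wt * KSt * KRt)%type -> Wt := fun o => o.1.1 in
  let tr (o : (Wt * KSt * KRt)%type) := run dir fS fR o.1.1 o.1.2 o.2 in
  (k <= h)%nat ->
  (* zero-error decodability *)
  (forall w ks kr, 0 < pW w -> 0 < pS ks -> 0 < pR kr ->
     dec kr (run dir fS fR w ks kr) = w) ->
  (* secrecy against every k-edge wiretapper *)
  (forall A : {set 'I_h}, #|A| = k ->
     cond_entropy #|F| P msg (fun o => view A (tr o)) = entropy #|F| P msg) ->
  entropy #|F| P msg <= INR N * (INR h - INR k).
Proof.
move=> P msg tr Hkh Hdec Hsec.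
have P_ge0 : forall o, 0 <= P o.
  by move=> o; apply: Rmult_le_pos; [apply: Rmult_le_pos|].
have Hq1 : (1 < #|F|)%N := card_finNzRing_gt1 F.
have Hq : 1 < INR #|F| by rewrite -INR_1; apply: lt_INR; apply/ltP.
have Hlnq : 0 < ln (INR #|F|) by rewrite -ln_1; apply: ln_increasing; lra.
pose A := [set widen_ord Hkh i | i in 'I_k].
have HA : #|A| = k.
  rewrite card_imset ?card_ord // => a b /(congr1 val) /= E; exact: val_inj.
rewrite -(Hsec A HA) /cond_entropy.
set S := \big[Rplus/R0]_x _.
pose M := INR (#|F| ^ (N * (h - k))).
have HM : 0 < M by apply: lt_0_INR; apply/ltP; rewrite expn_gt0 (ltnW Hq1).
have HlnM : ln M = INR N * (INR h - INR k) * ln (INR #|F|).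
  rewrite /M INR_expn ln_pow; last lra.
  have -> : INR (N * (h - k)) = INR (Nat.mul N (Nat.sub h k)) by [].
  rewrite mult_INR minus_INR //; exact/leP.
have Hsum1 : \big[Rplus/R0]_y prob P (fun o => view A (tr o) == y) = 1.
  rewrite [RHS](_ : 1 = prob P xpredT); last first.
    rewrite /prob sum_pair.
    rewrite (eq_bigr (fun ab => pW ab.1 * pS ab.2 * \big[Rplus/R0]_r pR r)); last first.
      by move=> [w s] _; rewrite Rsum_mull.
    rewrite sum_pair pR_sum.
    rewrite (eq_bigr (fun w => pW w * \big[Rplus/R0]_s pS s)); last first.
      by move=> w _; rewrite Rsum_mull; apply: eq_bigr => s _ /=; ring.
    rewrite pS_sum; under eq_bigr do rewrite Rmult_1_r; by rewrite pW_sum.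
  rewrite -(prob_marg P (fun o => view A (tr o)) xpredT).
  by apply: eq_bigr => y _; rewrite /prob; apply: eq_bigl => o; rewrite andbT.
have HS : - ln M <= S.
  rewrite /S exchange_big /=.
  rewrite -(Rmult_1_r (- ln M)) -Hsum1 Rsum_mull.
  apply: Rsum_le => y _.
  rewrite -(prob_marg P msg (fun o => view A (tr o) == y)).
  cbv zeta.
  apply: (gibbs (a := fun x => prob P (fun o => (msg o == x) && (view A (tr o) == y)))).
  - by move=> x; apply: prob_ge0.
  - exact: HM.
  - apply: le_INR; apply/leP.
    have := @count_supp F h k N Wt KSt KRt pW pS pR pW_ge0 pS_ge0 pR_ge0 dir fS fR dec A y Hdec.
    by rewrite HA.
rewrite HlnM in HS.
apply: (Rmult_le_reg_r (ln (INR #|F|))) => //.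
rewrite /Rdiv Rmult_assoc Rinv_l; last lra.
lra.
Qed.
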